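(* Every normal algebra of differentiable functions $\mathcal V$ is an extension of $R_\ell$; that is, it contains elements $u_i^{(n)}$ ($i\in I$, $n\in\mathbb Z_+$) with $\frac{\partial u_i^{(n)}}{\partial u_j^{(m)}}=\delta_{ij}\delta_{mn}$ for all $i,j,m,n$, which can moreover be chosen so that $\partial u_i^{(n)}=u_i^{(n+1)}$.
   Context: $\mathbb F$ field of characteristic 0, $I=\{1,\dots,\ell\}$. An algebra of differentiable functions is a unital commutative associative algebra $\mathcal V$ with a derivation $\partial$ and commuting derivations $\frac{\partial}{\partial u_i^{(n)}}$, only finitely many nonzero on each element, with $[\frac{\partial}{\partial u_i^{(n)}},\partial]=\frac{\partial}{\partial u_i^{(n-1)}}$ (zero if $n=0$). $R_\ell=\mathbb F[u_i^{(n)}]$ with $\partial u_i^{(n)}=u_i^{(n+1)}$. $\mathcal V_{n,i}=\{f:\frac{\partial f}{\partial u_j^{(m)}}=0$ for $(m,j)>(n,i)$ lexicographically$\}$, $\mathcal V_{n,0}=\mathcal V_{n-1,\ell}$. $\mathcal V$ is normal if $\frac{\partial}{\partial u_i^{(n)}}(\mathcal V_{n,i})=\mathcal V_{n,i}$ for all $i\in I,n\in\mathbb Z_+$. *)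

(* Defs.v *)
From HB Require Import structures.
From mathcomp Require Import all_boot all_order all_algebra.
Set Implicit Arguments. Unset Strict Implicit. Unset Printing Implicit Defensive.
Import GRing.Theory.
Local Open Scope ring_scope.

Definition is_derivation (F : fieldType) (V : comAlgType F) (D : V -> V) : Prop :=
  (forall x y : V, D (x + y) = D x + D y) /\
  (forall (a : F) (x : V), D (a *: x) = a *: D x) /\
  (forall x y : V, D (x * y) = D x * y + x * D y).

(* Algebra of differentiable functions in l variables u_i (i : 'I_l, the index
   set I = {1..l} shifted to {0..l-1}): D is the derivation \partial and
   d i n is the partial derivative \partial / \partial u_i^{(n)}. *)
Definition is_alg_diff_fun (F : fieldType) (V : comAlgType F) (l : nat)
    (D : V -> V) (d : 'I_l -> nat -> V -> V) : Prop :=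
  is_derivation D /\
  (forall i n, is_derivation (d i n)) /\
  (forall i n j m (f : V), d i n (d j m f) = d j m (d i n f)) /\
  (forall f : V, exists s : seq ('I_l * nat),
      forall i n, d i n f != 0 -> (i, n) \in s) /\
  (forall i n (f : V),
      d i n (D f) - D (d i n f) =
      match n with 0%N => 0 | n'.+1 => d i n' f end).

Definition Vni (F : fieldType) (V : comAlgType F) (l : nat)
    (d : 'I_l -> nat -> V -> V) (n : nat) (i : 'I_l) (f : V) : Prop :=
  forall (j : 'I_l) (m : nat),
    ((n < m)%N || ((m == n) && (i < j)%N)) -> d j m f = 0.

Definition is_normal (F : fieldType) (V : comAlgType F) (l : nat)
    (d : 'I_l -> nat -> V -> V) : Prop :=
  forall (i : 'I_l) (n : nat),
    (forall f, Vni d n i f -> Vni d n i (d i n f)) /\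
    (forall g, Vni d n i g -> exists f, Vni d n i f /\ d i n f = g).

(* Main.v *)
Require Import Defs.
From HB Require Import structures.
From mathcomp Require Import all_boot all_order all_algebra.
From Stdlib Require Import IndefiniteDescription.
Import GRing.Theory.
Local Open Scope ring_scope.

Section Aux.
Variables (F : fieldType) (V : comAlgType F).

Lemma der0 (D : V -> V) : is_derivation D -> D 0 = 0.
Proof.
move=> [Hadd _]; have := Hadd 0 0; rewrite addr0 => /esym/eqP.
by rewrite -subr_eq0 addrK => /eqP.
Qed.

Lemma der1 (D : V -> V) : is_derivation D -> D 1 = 0.
Proof.
move=> [_ [_ Hm]]; have := Hm 1 1; rewrite !mulr1 mul1r => /esym/eqP.
by rewrite -subr_eq0 addrK => /eqP.
Qed.

Lemma derB (D : V -> V) : is_derivation D -> forall x y, D (x - y) = D x - D y.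
Proof.
move=> HD x y; have [Hadd _] := HD.
have Hn : D (- y) = - D y.
  apply/eqP; rewrite -subr_eq0 opprK -Hadd addNr; apply/eqP; exact: der0.
by rewrite Hadd Hn.
Qed.
End Aux.

Theorem proposition4p3 (F : fieldType) (charF0 : [pchar F] =i pred0)
    (V : comAlgType F) (l : nat) (D : V -> V) (d : 'I_l -> nat -> V -> V) :
  is_alg_diff_fun D d -> is_normal d ->
  exists u : 'I_l -> nat -> V,
    (forall (i j : 'I_l) (n m : nat),
        d j m (u i n) = if (i == j) && (n == m) then 1 else 0) /\
    (forall (i : 'I_l) (n : nat), D (u i n) = u i n.+1).
Proof.
move=> [HD [Hd [Hcomm [_ HDd]]]] Hnorm.
have key : forall (i : 'I_l) t, exists f, Vni d 0 i f /\ d i 0 f = 1 /\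
    forall j : 'I_l, (i - t <= j)%N -> (j < i)%N -> d j 0 f = 0.
  move=> i; elim=> [|t [f [Vf [f1 fz]]]].
    have [_ Hs] := Hnorm i 0%N.
    have [f [Vf f1]] : exists f, Vni d 0 i f /\ d i 0 f = 1.
      apply: Hs => j m _; exact: der1.
    exists f; split=> //; split=> // j; rewrite subn0 => a b.
    by move: (leq_ltn_trans a b); rewrite ltnn.
  case Hk: (i - t)%N => [|k'].
    exists f; split=> //; split=> // j a b; apply: fz b; by rewrite Hk.
  have rl : (k' < l)%N.
    have : (k' < i)%N by have := leq_subr t i; rewrite Hk.
    move=> h; exact: (ltn_trans h (ltn_ord i)).
  set r : 'I_l := Ordinal rl.
  have ri : (r < i)%N by rewrite /= ; have := leq_subr t i; rewrite Hk.
  have Vg : Vni d 0 r (d r 0 f).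
    move=> j m /orP [m0|/andP [/eqP m0 rj]].
      by rewrite Hcomm (Vf j m); [exact: der0|rewrite m0].
    subst m; rewrite Hcomm.
    case: (ltngtP j i) => ji.
    - rewrite fz //; [exact: der0|by rewrite Hk].
    - by rewrite Vf ?ji ?orbT //; exact: der0.
    - have -> : j = i by apply: val_inj.
      by rewrite f1; exact: der1.
  have [_ Hs] := Hnorm r 0%N.
  have [h [Vh h1]] := Hs _ Vg.
  exists (f - h); split; last split.
  - move=> j m Hjm; rewrite derB // Vf // Vh ?subr0 //.
    move: Hjm => /orP [->//|/andP [-> ij]]; by rewrite (ltn_trans ri ij) orbT.
  - by rewrite derB // f1 Vh ?subr0 // ri orbT.
  - move=> j a b; rewrite derB //.
    have : (k' <= j)%N by move: a; rewrite subnS Hk.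
    rewrite leq_eqVlt => /orP [/eqP kj|kj].
      have -> : j = r by apply: val_inj.
      by rewrite h1 subrr.
    by rewrite fz ?Hk // Vh ?subr0 // kj orbT.
have key0 : forall i : 'I_l, exists f, Vni d 0 i f /\ d i 0 f = 1 /\
    forall j : 'I_l, (j < i)%N -> d j 0 f = 0.
  move=> i; have [f [A [B C]]] := key i i.
  exists f; split=> //; split=> // j; apply: C; by rewrite subnn.
pose u0 i := proj1_sig (constructive_indefinite_description _ (key0 i)).
have u0P i : Vni d 0 i (u0 i) /\ d i 0 (u0 i) = 1 /\
    forall j : 'I_l, (j < i)%N -> d j 0 (u0 i) = 0.
  exact: proj2_sig (constructive_indefinite_description _ (key0 i)).
exists (fun i n => iter n D (u0 i)); split; last by [].
move=> i j n /=; elim: n => [|n IH] m.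
  have [A [B C]] := u0P i.
  case: m => [|m]; last by rewrite A // andbF.
  rewrite andbT; case: (ltngtP j i) => ji.
  - rewrite C //; case: eqP => // e; by move: ji; rewrite e ltnn.
  - rewrite A ?ji ?orbT //; case: eqP => // e; by move: ji; rewrite e ltnn.
  - have -> : j = i by apply: val_inj.
    by rewrite eqxx.
rewrite [iter n.+1 _ _]/=.
have Dc : forall b : bool, D (if b then 1 else 0) = 0.
  by case; [exact: der1|exact: der0].
have := HDd j m (iter n D (u0 i)); rewrite IH Dc subr0 => ->.
case: m => [|m] /=; [by rewrite andbF|by rewrite ?IH].
Qed.
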